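(* If an $(M,d_s,d_x,\epsilon)$ code exists, then \[\epsilon\ge\inf_{P_{ZY|X}}\ \sup_{P_{\bar X|\bar Z\bar Y}}\ \sup_{\gamma\ge0}\Big\{\mathbb P\big[f_{\bar X|\bar Z\bar Y}(S,X,Z,Y)\ge\gamma\big]-\exp(-\gamma)\Big\},\] where the infimum is over conditional distributions $P_{ZY|X}:\mathcal X\to\widehat{\mathcal S}\times\widehat{\mathcal X}$, $(S,X,Z,Y)\sim P_{SX}P_{ZY|X}$, the middle supremum is over conditional distributions $P_{\bar X|\bar Z\bar Y}:\widehat{\mathcal S}\times\widehat{\mathcal X}\to\mathcal X$ such that the Radon–Nikodym derivative of $P_{\bar X|\bar Z=z,\bar Y=y}$ with respect to $P_X$ at $x$ exists for $P_{ZY|X}P_X$-a.e. $(z,y,x)$, and \[f_{\bar X|\bar Z\bar Y}(s,x,z,y)=\log\frac{\mathrm dP_{\bar X|\bar Z=z,\bar Y=y}}{\mathrm dP_X}(x)+\sup_{\lambda_s\ge0}\lambda_s(\mathsf d_s(s,z)-d_s)+\sup_{\lambda_x\ge0}\lambda_x(\mathsf d_x(x,y)-d_x)-\log M.\]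
   Context: Let $\mathcal S,\mathcal X,\widehat{\mathcal S},\widehat{\mathcal X}$ be finite sets, $P_{SX}$ a distribution on $\mathcal S\times\mathcal X$, and $\mathsf d_s:\mathcal S\times\widehat{\mathcal S}\to[0,\infty)$, $\mathsf d_x:\mathcal X\times\widehat{\mathcal X}\to[0,\infty)$ distortion measures; fix $d_s,d_x\ge0$. An $(M,d_s,d_x,\epsilon)$ code is a random encoder $P_{U|X}:\mathcal X\to\{1,\dots,M\}$ and a random decoder $P_{ZY|U}:\{1,\dots,M\}\to\widehat{\mathcal S}\times\widehat{\mathcal X}$ (so $S-X-U-(Z,Y)$) such that $\mathbb P[\mathsf d_s(S,Z)>d_s\text{ or }\mathsf d_x(X,Y)>d_x]\le\epsilon$. $\log$ and $\exp$ are to a common base. *)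

(* Defs.v *)
From HB Require Import structures.
From mathcomp Require Import all_boot all_order all_algebra.
From mathcomp Require Import all_classical all_reals.
From mathcomp Require Import ereal exp.
Set Implicit Arguments. Unset Strict Implicit. Unset Printing Implicit Defensive.
Import Order.TTheory GRing.Theory Num.Theory.
Local Open Scope ring_scope.
Local Open Scope classical_set_scope.

Section Defs.
Variable R : realType.

Definition is_pmf (T : finType) (p : T -> R) : Prop :=
  (forall t, 0 <= p t) /\ \sum_(t : T) p t = 1.

Definition is_kernel (A B : finType) (k : A -> B -> R) : Prop :=
  forall a, is_pmf (k a).

Definition marg2 (S X : finType) (P : S * X -> R) (x : X) : R :=
  \sum_(s : S) P (s, x).

(* An (M, d_s, d_x, eps) code: random encoder P_{U|X} : X -> {1..M} (here 'I_M)
   and random decoder P_{ZY|U} : {1..M} -> Shat x Xhat with excess-distortion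
   probability at most eps. *)
Definition is_code (S X Sh Xh : finType) (P : S * X -> R)
    (dS : S -> Sh -> R) (dX : X -> Xh -> R) (M : nat) (ds dx eps : R) : Prop :=
  exists (E : X -> 'I_M -> R) (D : 'I_M -> Sh * Xh -> R),
    [/\ is_kernel E, is_kernel D &
      \sum_(sx : S * X) \sum_(u : 'I_M) \sum_(zy : Sh * Xh)
        P sx * E sx.2 u * D u zy *
          ((ds < dS sx.1 zy.1) || (dx < dX sx.2 zy.2))%:R <= eps].

Definition elogb (b p : R) : \bar R :=
  if p == 0 then -oo%E else (ln p / ln b)%:E.

Definition suplam (t : R) : \bar R :=
  ereal_sup [set (l * t)%:E | l in [set l : R | 0 <= l]].

(* f_{Xbar|Zbar Ybar}(s,x,z,y); the Radon-Nikodym derivative of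
   P_{Xbar|Zbar=z,Ybar=y} w.r.t. P_X at x is Pbar (z,y) x / P_X x.
   The (undefined) sum -oo + +oo is read as +oo (dual addition). *)
Definition finfo (S X Sh Xh : finType) (b : R) (P : S * X -> R)
    (Pbar : Sh * Xh -> X -> R) (dS : S -> Sh -> R) (dX : X -> Xh -> R)
    (ds dx : R) (M : nat) (s : S) (x : X) (z : Sh) (y : Xh) : \bar R :=
  dual_adde (dual_adde (dual_adde (elogb b (Pbar (z, y) x / marg2 P x))
                          (suplam (dS s z - ds)))
               (suplam (dX x y - dx)))
     (- (ln M%:R / ln b))%:E.

Definition prob_f_ge (S X Sh Xh : finType) (b : R) (P : S * X -> R)
    (W : X -> Sh * Xh -> R) (Pbar : Sh * Xh -> X -> R)
    (dS : S -> Sh -> R) (dX : X -> Xh -> R) (ds dx : R) (M : nat) (g : R) : R :=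
  \sum_(sx : S * X) \sum_(zy : Sh * Xh)
    P sx * W sx.2 zy *
      (g%:E <= finfo b P Pbar dS dX ds dx M sx.1 sx.2 zy.1 zy.2)%E%:R.

(* admissible Pbar: a kernel Shat x Xhat -> X such that, for P_{ZY}-a.e. (z,y),
   P_{Xbar|z,y} << P_X (so the RN derivative exists) *)
Definition admissible (S X Sh Xh : finType) (P : S * X -> R)
    (W : X -> Sh * Xh -> R) (Pbar : Sh * Xh -> X -> R) : Prop :=
  is_kernel Pbar /\
  forall (zy : Sh * Xh) (x : X),
    0 < \sum_(x' : X) marg2 P x' * W x' zy -> marg2 P x = 0 -> Pbar zy x = 0.

End Defs.

(* Main.v *)
Require Import Defs.
From HB Require Import structures.
From mathcomp Require Import all_boot all_order all_algebra.
From mathcomp Require Import all_classical all_reals.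
From mathcomp Require Import ereal exp.
From mathcomp Require Import lra.
Import Order.TTheory GRing.Theory Num.Theory.
Local Open Scope ring_scope.
Local Open Scope classical_set_scope.

Lemma suplam_le0 (R : realType) (t : R) : t <= 0 -> suplam t = 0%E.
Proof.
move=> t0; apply/eqP; rewrite eq_le; apply/andP; split.
- apply: ge_ereal_sup => _ [l l0 <-]; rewrite lee_fin; exact: mulr_ge0_le0.
- apply: ereal_sup_ubound; exists 0 => //=; by rewrite mul0r.
Qed.

Lemma key_ineq (R : realType) (b PX Pb g : R) (M : nat) : 1 < b -> 0 <= PX ->
  0 <= Pb -> (0 < M)%N ->
  (g%:E <= dual_adde (elogb b (Pb / PX)) (- (ln M%:R / ln b))%:E)%E ->
  PX * M%:R * b `^ g <= Pb.
Proof.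
move=> b1 PX0 Pb0 M0; rewrite /elogb.
case: eqP => [_|/eqP r0]; first by rewrite /dual_adde leeNy_eq.
rewrite /dual_adde lee_fin => H.
have PXn0 : PX != 0 by apply: contra r0 => /eqP->; rewrite invr0 mulr0.
have Pbn0 : Pb != 0 by apply: contra r0 => /eqP->; rewrite mul0r.
have PXp : 0 < PX by rewrite lt_neqAle eq_sym PXn0.
have Pbp : 0 < Pb by rewrite lt_neqAle eq_sym Pbn0.
have lb : 0 < ln b := ln_gt0 b1.
have b0 : 0 < b by apply: lt_trans b1.
have Mp : 0 < M%:R :> R by rewrite ltr0n.
have rp : 0 < Pb / PX by apply: divr_gt0.
have bg : 0 < b `^ g by apply: powR_gt0.
rewrite -ler_ln ?posrE ?mulr_gt0 //.
rewrite !lnM ?posrE ?mulr_gt0 // ln_powR.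
have -> : ln Pb = ln PX + ln (Pb / PX).
  by rewrite -lnM ?posrE // mulrC divfK.
move: H; rewrite -mulNr -mulrDl ler_pdivlMr // => H.
lra.
Qed.

Lemma bool_ind3 (R : realType) (a b c : bool) : (a ==> (b || c)) ->
  a%:R <= b%:R + c%:R :> R.
Proof.
by case: a; case: b; case: c => //= _;
  rewrite ?addr0 ?add0r ?lerDl ?ler01 ?addr_ge0 ?ler0n ?lexx.
Qed.

Lemma dadde0' (R : realType) (x : \bar R) : dual_adde x 0%E = x.
Proof. case: x => [r| |] //; rewrite /dual_adde //. by rewrite -[in RHS](addr0 r). Qed.

Lemma sum_pair (R : realType) (T1 T2 : finType) (F : T1 * T2 -> R) :
  \sum_(p : T1 * T2) F p = \sum_(t1 : T1) \sum_(t2 : T2) F (t1, t2).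
Proof. by rewrite pair_big; apply: eq_bigr => -[a c]. Qed.

Theorem theorem3 (R : realType) (S X Sh Xh : finType) (P : S * X -> R)
    (dS : S -> Sh -> R) (dX : X -> Xh -> R) (ds dx : R) (M : nat) (eps b : R) :
  1 < b ->
  is_pmf P ->
  (forall s z, 0 <= dS s z) -> (forall x y, 0 <= dX x y) ->
  0 <= ds -> 0 <= dx ->
  is_code P dS dX M ds dx eps ->
  (ereal_inf [set ereal_sup
      [set ereal_sup
         [set ((prob_f_ge b P W Pbar dS dX ds dx M g - b `^ (- g))%R)%:E
         | g in [set g : R | (0 <= g)%R]]
      | Pbar in [set Pbar | admissible P W Pbar]]
    | W in [set W : X -> Sh * Xh -> R | is_kernel W]] <= eps%:E)%E.
Proof.
move=> b1 [P0 P1] _ _ _ _ [E [D [EK DK Hc]]].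
pose W0 := fun x zy => \sum_(u < M) E x u * D u zy.
have W0ge0 : forall x zy, 0 <= W0 x zy.
  move=> x zy; apply: sumr_ge0 => u _; apply: mulr_ge0; [exact: (EK x).1 | exact: (DK u).1].
have W0K : is_kernel W0.
  move=> x; split; first exact: W0ge0.
  rewrite /W0 exchange_big /=.
  under eq_bigr do rewrite -mulr_sumr (DK _).2 mulr1.
  exact: (EK x).2.
have Mpos : forall x : X, (0 < M)%N.
  move=> x; rewrite lt0n; apply/negP => /eqP M0.
  have : \sum_(u : 'I_M) E x u = 0.
    apply: big1 => u _; exfalso; have := ltn_ord u.
    by rewrite [X in (_ < X)%N]M0.
  by rewrite (EK x).2 => /eqP; rewrite oner_eq0.
apply: (le_trans (@ereal_inf_lbound _ _ _ _)); first by exists W0.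
apply: ge_ereal_sup => _ [Pbar [PbK _] <-].
apply: ge_ereal_sup => _ [g g0 <-].
rewrite lee_fin.
pose c := b `^ g.
have b0 : 0 < b by apply: lt_trans b1.
have cp : 0 < c by apply: powR_gt0.
pose k := c^-1 / M%:R.
have kge0 : 0 <= k by rewrite /k divr_ge0 // ?invr_ge0 ?ltW.
pose exc := fun (sx : S * X) (zy : Sh * Xh) =>
  ((ds < dS sx.1 zy.1) || (dx < dX sx.2 zy.2)).
pose A := fun (x : X) (zy : Sh * Xh) => (marg2 P x * M%:R * c <= Pbar zy x).
have step1 : prob_f_ge b P W0 Pbar dS dX ds dx M g <=
   \sum_(sx : S * X) \sum_(zy : Sh * Xh) P sx * W0 sx.2 zy * (exc sx zy)%:R +
   \sum_(sx : S * X) \sum_(zy : Sh * Xh) P sx * W0 sx.2 zy * (A sx.2 zy)%:R.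
  rewrite /prob_f_ge -big_split /=; apply: ler_sum => sx _.
  rewrite -big_split /=; apply: ler_sum => zy _.
  rewrite -mulrDr; apply: ler_wpM2l; first by apply: mulr_ge0.
  apply: bool_ind3; apply/implyP => Hf.
  case He: (exc sx zy) => //=.
  suff -> : A sx.2 zy by [].
    move: He; rewrite /exc => /negbT; rewrite negb_or -!leNgt => /andP [h1 h2].
    move: Hf; rewrite /finfo (@suplam_le0 _ (dS _ _ - _)) ?subr_le0 //.
    rewrite (@suplam_le0 _ (dX _ _ - _)) ?subr_le0 // !dadde0' => Hf.
    rewrite -surjective_pairing in Hf.
    apply: key_ineq Hf => //; last exact: Mpos sx.2.
      by apply: sumr_ge0 => s _; apply: P0.
    exact: (PbK zy).1.
have step2 : \sum_(sx : S * X) \sum_(zy : Sh * Xh) P sx * W0 sx.2 zy * (exc sx zy)%:R <= eps.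
  apply: le_trans Hc; rewrite le_eqVlt; apply/orP; left; apply/eqP.
  apply: eq_bigr => sx _; rewrite [RHS]exchange_big /=.
  apply: eq_bigr => zy _; rewrite /W0 mulr_sumr mulr_suml.
  by apply: eq_bigr => u _; rewrite /exc !mulrA.
have step3 : \sum_(sx : S * X) \sum_(zy : Sh * Xh) P sx * W0 sx.2 zy * (A sx.2 zy)%:R <= c^-1.
  rewrite sum_pair /= exchange_big /=.
  apply: (@le_trans _ _ (\sum_(x : X) \sum_(zy : Sh * Xh)
       (\sum_(u < M) D u zy * k) * Pbar zy x)).
    apply: ler_sum => x _; rewrite exchange_big /=; apply: ler_sum => zy _.
    rewrite -!mulr_suml.
    have -> : \sum_(s : S) P (s, x) = marg2 P x by [].
    have PXge0 : 0 <= marg2 P x by apply: sumr_ge0 => s _; apply: P0.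
    have Pbge0 : 0 <= Pbar zy x by exact: (PbK zy).1.
    rewrite /A; case: (boolP (marg2 P x * M%:R * c <= Pbar zy x)) => HA /=; last first.
      rewrite mulr0; apply: mulr_ge0 => //; apply: mulr_ge0 => //.
      by apply: sumr_ge0 => u _; exact: (DK u).1.
    rewrite mulr1 (_ : (\sum_(i < M) D i zy) * k * Pbar zy x =
      (Pbar zy x * k) * \sum_(i < M) D i zy); last first.
      by rewrite [LHS]mulrC [LHS]mulrCA [LHS]mulrC.
    have Mp : 0 < M%:R :> R by rewrite ltr0n; exact: Mpos x.
    apply: ler_pM => //.
      by rewrite /k mulrA ler_pdivlMr // ler_pdivlMr.
    apply: ler_sum => u _; apply: ler_piMl; first exact: (DK u).1.
    rewrite -(EK x).2 (bigD1 u) //= lerDl; apply: sumr_ge0 => i _.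
    exact: (EK x).1.
  rewrite exchange_big /=.
  under eq_bigr do rewrite -mulr_sumr (PbK _).2 mulr1.
  rewrite exchange_big /=.
  under eq_bigr do rewrite -mulr_suml (DK _).2 mul1r.
  rewrite sumr_const card_ord /k.
  have [->|Mp] := posnP M; first by rewrite mulr0n invr_ge0 ltW.
  by rewrite -(mulr_natr (c^-1 / M%:R)) divfK // pnatr_eq0 -lt0n.
rewrite lerBlDr powRN -/c.
apply: (le_trans step1); exact: lerD.
Qed.
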